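(* Suppose $\mathit{Act}$ is finite and $|\mathit{Act}|\ge2$. Then $\mathcal{E}_{\omega,f}'=\mathcal{E}_\omega\cup\mathcal{E}_{v,f}'$ is complete for $\simeq_\omega$ over open monitors: for all monitors $m,n$, if $m\simeq_\omega n$ then $\mathcal{E}_{\omega,f}'\vdash m=n$.
   Context: Monitors: terms $m,n ::= v \mid a.m \mid m+n \mid x$ over a finite action set $\mathit{Act}$ and variables $x$, verdicts $v::=\mathit{end}\mid\mathit{yes}\mid\mathit{no}$. $\sum_{i\in I}m_i$ is $\mathit{end}$ for $I=\emptyset$. Semantics: $\xrightarrow{\alpha}$ ($\alpha\in\mathit{Act}\cup\{\tau\}$) is the least relation with $a.m\xrightarrow{a}m$; $m\xrightarrow{\alpha}m'$ implies $m+n\xrightarrow{\alpha}m'$ and $n+m\xrightarrow{\alpha}m'$; $v\xrightarrow{\alpha}v$ for verdicts $v$. Weak transitions: $m\xRightarrow{\varepsilon}m'$ iff $m(\xrightarrow{\tau})^*m'$; $m\xRightarrow{a}m'$ iff $m\xRightarrow{\varepsilon}\xrightarrow{a}\xRightarrow{\varepsilon}m'$; $m\xRightarrow{as'}m'$ ($s'\ne\varepsilon$) iff $m\xRightarrow{a}m_1\xRightarrow{s'}m'$. For closed $m$, $L_a(m)=\{s\mid m\xRightarrow{s}\mathit{yes}\}$, $L_r(m)=\{s\mid m\xRightarrow{s}\mathit{no}\}$; closed $m\simeq_\omega n$ iff $L_a(m)\cdot\mathit{Act}^\omega=L_a(n)\cdot\mathit{Act}^\omega$ and $L_r(m)\cdot\mathit{Act}^\omega=L_r(n)\cdot\mathit{Act}^\omega$;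 for open terms iff $\sigma(m)\simeq_\omega\sigma(n)$ for all closed substitutions $\sigma$. Notation for $s\in\mathit{Act}^*$: $s.m$ is $a_1.(\cdots a_k.m)$ if $s=a_1\dots a_k$ ($\varepsilon.m=m$); $s^1=s$, $s^i=ss^{i-1}$; $\mathit{pre}(s)$ is the set of prefixes of $s$; $\overline{s}^{\le}(m)=\sum_{|s'|\le|s|,\ s'\notin\mathit{pre}(s)}s'.m$; $\overline{s}(m)=\overline{s}^{\le}(m)+s.\sum_{a\in\mathit{Act}}a.m$; $\overline{s}^{(1)}(m)=\overline{s}(m)$ and for $k\ge2$, $\overline{s}^{(k)}(m)=\sum_{1\le i<k-1}s^i.\overline{s}^{\le}(m)+s^{k-1}.\overline{s}(m)$. $\mathcal{E}\vdash m=n$ denotes derivability by reflexivity, symmetry, transitivity, substitution and congruence for $a.\_$ and $+$. $\mathcal{E}_v$: (A1) $x+y=y+x$; (A2) $x+(y+z)=(x+y)+z$; (A3) $x+x=x$; (A4) $x+\mathit{end}=x$; for each $a\in\mathit{Act}$: ($E_a$) $a.\mathit{end}=\mathit{end}$; ($Y_a$) $\mathit{yes}=\mathit{yes}+a.\mathit{yes}$; ($N_a$) $\mathit{no}=\mathit{no}+a.\mathit{no}$; ($D_a$) $a.(x+y)=a.x+a.y$. $\mathcal{E}_\omega=\mathcal{E}_v\cup\{Y_\omega,N_\omega\}$ with ($Y_\omega$) $\mathit{yes}=\sum_{a\in\mathit{Act}}a.\mathit{yes}$, ($N_\omega$) $\mathit{no}=\sum_{a\in\mathit{Act}}a.\mathit{no}$.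 $\mathcal{E}_{v,f}'=\mathcal{E}_v\cup\{O1\}\cup\mathcal{O}$ with (O1) $\mathit{yes}+\mathit{no}=\mathit{yes}+\mathit{no}+x$ and $\mathcal{O}=\{O2_{s,k}\mid s\in\mathit{Act}^*,k\ge1\}$, ($O2_{s,k}$) $x+s.x+\overline{s}^{(k)}(\mathit{yes}+\mathit{no})=x+\overline{s}^{(k)}(\mathit{yes}+\mathit{no})$. *)

(* Defs.v *)
From mathcomp Require Import all_boot.
Set Implicit Arguments. Unset Strict Implicit. Unset Printing Implicit Defensive.

Inductive verdict := Vend | Vyes | Vno.

Section Monitors.
Variable A : finType.

Inductive mon : Type :=
  | Verd of verdict
  | Pre of A & mon
  | Sum of mon & mon
  | Var of nat.

Definition mend := Verd Vend.
Definition myes := Verd Vyes.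
Definition mno := Verd Vno.

Fixpoint bigsum (l : seq mon) : mon :=
  match l with
  | [::] => mend
  | [:: m] => m
  | m :: l' => Sum m (bigsum l')
  end.

Fixpoint wpre (s : seq A) (m : mon) : mon :=
  match s with
  | [::] => m
  | a :: s' => Pre a (wpre s' m)
  end.

Fixpoint subst (sg : nat -> mon) (m : mon) : mon :=
  match m with
  | Verd v => Verd v
  | Pre a m' => Pre a (subst sg m')
  | Sum m1 m2 => Sum (subst sg m1) (subst sg m2)
  | Var x => sg x
  end.

Fixpoint closed (m : mon) : bool :=
  match m with
  | Verd _ => true
  | Pre _ m' => closed m'
  | Sum m1 m2 => closed m1 && closed m2
  | Var _ => false
  end.

(* operational semantics; None stands for tau *)
Inductive step : mon -> option A -> mon -> Prop :=
  | st_pre a m : step (Pre a m) (Some a) m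
  | st_sumL m n al m' : step m al m' -> step (Sum m n) al m'
  | st_sumR m n al m' : step m al m' -> step (Sum n m) al m'
  | st_verd v al : step (Verd v) al (Verd v).

Inductive taus : mon -> mon -> Prop :=
  | taus_refl m : taus m m
  | taus_step m m1 m' : step m None m1 -> taus m1 m' -> taus m m'.

Definition weak_act (m : mon) (a : A) (m' : mon) : Prop :=
  exists m1 m2, taus m m1 /\ step m1 (Some a) m2 /\ taus m2 m'.

Fixpoint wtrace (m : mon) (s : seq A) (m' : mon) : Prop :=
  match s with
  | [::] => taus m m'
  | a :: s' =>
      match s' with
      | [::] => weak_act m a m'
      | _ :: _ => exists m1, weak_act m a m1 /\ wtrace m1 s' m'
      end
  end.

Definition La (m : mon) (s : seq A) : Prop := wtrace m s myes.
Definition Lr (m : mon) (s : seq A) : Prop := wtrace m s mno.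

(* L . Act^omega, as a predicate on infinite words *)
Definition omega_ext (L : seq A -> Prop) (w : nat -> A) : Prop :=
  exists k, L (mkseq w k).

Definition omega_eq_closed (m n : mon) : Prop :=
  (forall w, omega_ext (La m) w <-> omega_ext (La n) w) /\
  (forall w, omega_ext (Lr m) w <-> omega_ext (Lr n) w).

Definition omega_eq (m n : mon) : Prop :=
  forall sg : nat -> mon, (forall x, closed (sg x)) ->
    omega_eq_closed (subst sg m) (subst sg n).

Inductive derivable (E : mon -> mon -> Prop) : mon -> mon -> Prop :=
  | d_ax m n : E m n -> derivable E m n
  | d_refl m : derivable E m m
  | d_sym m n : derivable E m n -> derivable E n m
  | d_trans m n p : derivable E m n -> derivable E n p -> derivable E m p
  | d_subst sg m n : derivable E m n -> derivable E (subst sg m) (subst sg n)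
  | d_pre a m n : derivable E m n -> derivable E (Pre a m) (Pre a n)
  | d_sum m1 n1 m2 n2 : derivable E m1 n1 -> derivable E m2 n2 ->
      derivable E (Sum m1 m2) (Sum n1 n2).

Fixpoint words_le (n : nat) : seq (seq A) :=
  match n with
  | 0 => [:: [::]]
  | n'.+1 => [::] :: [seq a :: w | a <- enum A, w <- words_le n']
  end.

Definition wpow (s : seq A) (i : nat) : seq A := flatten (nseq i s).

Definition sbar_le (s : seq A) (m : mon) : mon :=
  bigsum [seq wpre s' m | s' <- words_le (size s) & ~~ prefix s' s].

Definition sumAct (m : mon) : mon := bigsum [seq Pre a m | a <- enum A].

Definition sbar (s : seq A) (m : mon) : mon :=
  Sum (sbar_le s m) (wpre s (sumAct m)).

Definition sbar_k (s : seq A) (k : nat) (m : mon) : mon :=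
  if k <= 1 then sbar s m
  else bigsum ([seq wpre (wpow s i) (sbar_le s m) | i <- iota 1 (k - 2)]
               ++ [:: wpre (wpow s k.-1) (sbar s m)]).

Definition vx := Var 0.
Definition vy := Var 1.
Definition vz := Var 2.

(* E'_{omega,f} = E_omega U E'_{v,f} = E_v U {Y_omega, N_omega, O1} U O *)
Inductive E_omega_f : mon -> mon -> Prop :=
  | ax_A1 : E_omega_f (Sum vx vy) (Sum vy vx)
  | ax_A2 : E_omega_f (Sum vx (Sum vy vz)) (Sum (Sum vx vy) vz)
  | ax_A3 : E_omega_f (Sum vx vx) vx
  | ax_A4 : E_omega_f (Sum vx mend) vx
  | ax_E a : E_omega_f (Pre a mend) mend
  | ax_Y a : E_omega_f myes (Sum myes (Pre a myes))
  | ax_N a : E_omega_f mno (Sum mno (Pre a mno))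
  | ax_D a : E_omega_f (Pre a (Sum vx vy)) (Sum (Pre a vx) (Pre a vy))
  | ax_Yomega : E_omega_f myes (sumAct myes)
  | ax_Nomega : E_omega_f mno (sumAct mno)
  | ax_O1 : E_omega_f (Sum myes mno) (Sum (Sum myes mno) vx)
  | ax_O2 (s : seq A) (k : nat) : 1 <= k ->
      E_omega_f (Sum (Sum vx (wpre s vx)) (sbar_k s k (Sum myes mno)))
                (Sum vx (sbar_k s k (Sum myes mno))).

End Monitors.

(* Main.v *)
Require Import Defs.
From mathcomp Require Import all_boot zify.
Set Implicit Arguments. Unset Strict Implicit. Unset Printing Implicit Defensive.

Section Proof.
Variable A : finType.
Local Notation mon := (mon A).
Local Notation "m =E n" := (derivable (@E_omega_f A) m n) (at level 70).

Definition sg3 (p q r : mon) : nat -> mon := fun i => nth (mend A) [:: p; q; r] i.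

Lemma eR m : m =E m. Proof. exact: d_refl. Qed.
Lemma eS m n : m =E n -> n =E m. Proof. exact: d_sym. Qed.
Lemma eT m n p : m =E n -> n =E p -> m =E p. Proof. exact: d_trans. Qed.
Lemma eSum m1 n1 m2 n2 : m1 =E n1 -> m2 =E n2 -> Sum m1 m2 =E Sum n1 n2.
Proof. exact: d_sum. Qed.
Lemma ePre a m n : m =E n -> Pre a m =E Pre a n. Proof. exact: d_pre. Qed.

Lemma eA1 p q : Sum p q =E Sum q p.
Proof. exact: (d_subst (sg3 p q (mend A)) (d_ax (ax_A1 A))). Qed.
Lemma eA2 p q r : Sum p (Sum q r) =E Sum (Sum p q) r.
Proof. exact: (d_subst (sg3 p q r) (d_ax (ax_A2 A))). Qed.
Lemma eA3 p : Sum p p =E p.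
Proof. exact: (d_subst (sg3 p p p) (d_ax (ax_A3 A))). Qed.
Lemma eA4 p : Sum p (mend A) =E p.
Proof. exact: (d_subst (sg3 p p p) (d_ax (ax_A4 A))). Qed.
Lemma eE a : Pre a (mend A) =E mend A.
Proof. exact: (d_ax (ax_E a)). Qed.
Lemma eD a p q : Pre a (Sum p q) =E Sum (Pre a p) (Pre a q).
Proof. exact: (d_subst (sg3 p q q) (d_ax (ax_D a))). Qed.
Lemma eO1 p : Sum (myes A) (mno A) =E Sum (Sum (myes A) (mno A)) p.
Proof. exact: (d_subst (sg3 p p p) (d_ax (ax_O1 A))). Qed.

Definition fsum (l : seq mon) : mon := foldr (@Sum A) (mend A) l.

Lemma fsum_cat l1 l2 : fsum (l1 ++ l2) =E Sum (fsum l1) (fsum l2).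
Proof.
elim: l1 => [|x l1 IH] /=.
  exact: eT (eS (eA4 _)) (eA1 _ _).
exact: eT (eSum (eR x) IH) (eA2 _ _ _).
Qed.

Lemma bigsum_fsum l : bigsum l =E fsum l.
Proof.
elim: l => [|x [|y l] IH] /=; first exact: eR.
  exact: eS (eA4 _).
exact: eSum (eR _) IH.
Qed.

Lemma fsum_congr (T : Type) (f g : T -> mon) l :
  (forall x, f x =E g x) -> fsum (map f l) =E fsum (map g l).
Proof.
move=> H; elim: l => [|x l IH] /=; first exact: eR.
exact: eSum (H x) IH.
Qed.

Lemma fsum_flatten (ll : seq (seq mon)) :
  fsum (flatten ll) =E fsum (map fsum ll).
Proof.
elim: ll => [|l ll IH] /=; first exact: eR.
exact: eT (fsum_cat _ _) (eSum (eR _) IH).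
Qed.

Section Mem.
Variables (T : eqType) (f : T -> mon).

Lemma fsum_absorb (L : seq T) e : e \in L ->
  fsum (map f L) =E Sum (f e) (fsum (map f L)).
Proof.
elim: L => [|x L IH] //=; rewrite in_cons => /orP [/eqP ->|H].
  exact: eT (eSum (eS (eA3 _)) (eR _)) (eS (eA2 _ _ _)).
apply: eT (eSum (eR _) (IH H)) _.
apply: eT (eA2 _ _ _) _.
apply: eT (eSum (eA1 _ _) (eR _)) _.
exact: eS (eA2 _ _ _).
Qed.

Lemma fsum_sub (L1 L2 : seq T) : {subset L1 <= L2} ->
  fsum (map f L2) =E Sum (fsum (map f L1)) (fsum (map f L2)).
Proof.
elim: L1 => [|x L1 IH] H /=.
  exact: eT (eS (eA4 _)) (eA1 _ _).
have H1 : {subset L1 <= L2} by move=> y Hy; apply: H; rewrite in_cons Hy orbT.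
apply: eT _ (eA2 _ _ _).
apply: eT _ (eSum (eR _) (IH H1)).
apply: fsum_absorb; apply: H; exact: mem_head.
Qed.

Lemma fsum_eqset (L1 L2 : seq T) : L1 =i L2 ->
  fsum (map f L1) =E fsum (map f L2).
Proof.
move=> H.
have H12 : {subset L1 <= L2} by move=> y; rewrite H.
have H21 : {subset L2 <= L1} by move=> y; rewrite H.
apply: eT (fsum_sub H21) _.
apply: eT (eA1 _ _) _.
exact: eS (fsum_sub H12).
Qed.
End Mem.

Lemma Pre_fsum a l : Pre a (fsum l) =E fsum (map (Pre a) l).
Proof.
elim: l => [|x l IH] /=; first exact: eE.
exact: eT (eD _ _ _) (eSum (eR _) IH).
Qed.

Lemma wpre_cong w m n : m =E n -> wpre w m =E wpre w n.
Proof. elim: w => [|a w IH] //= H; exact: ePre (IH H). Qed.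

Lemma wpre_fsum w l : wpre w (fsum l) =E fsum (map (@wpre A w) l).
Proof.
elim: w l => [|a w IH] l /=; first by rewrite map_id; exact: eR.
apply: eT (ePre a (IH l)) _.
apply: eT (Pre_fsum _ _) _.
rewrite -map_comp; exact: eR.
Qed.

Lemma wpre_sum w p q : wpre w (Sum p q) =E Sum (wpre w p) (wpre w q).
Proof.
elim: w => [|a w IH] /=; first exact: eR.
exact: eT (ePre a IH) (eD _ _ _).
Qed.

Lemma wpre_cat u w (m : mon) : wpre (u ++ w) m = wpre u (wpre w m).
Proof. by elim: u => //= a u ->. Qed.


Definition ent := (seq A * (bool + nat))%type.
Definition vb (b : bool) := if b then Vyes else Vno.
Definition leaf (l : bool + nat) : mon :=
  match l with inl b => Verd A (vb b) | inr x => Var A x end.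
Definition mono (e : ent) : mon := wpre e.1 (leaf e.2).

Fixpoint flat (m : mon) : seq ent :=
  match m with
  | Verd Vyes => [:: ([::], inl true)]
  | Verd Vno => [:: ([::], inl false)]
  | Verd Vend => [::]
  | Pre a m' => [seq (a :: e.1, e.2) | e <- flat m']
  | Sum m1 m2 => flat m1 ++ flat m2
  | Var x => [:: ([::], inr x)]
  end.

Lemma flat_ok m : m =E fsum (map mono (flat m)).
Proof.
elim: m => [[]| a m IH | m1 IH1 m2 IH2 | x] /=.
- exact: eR.
- exact: eS (eA4 _).
- exact: eS (eA4 _).
- apply: eT (ePre a IH) _; apply: eT (Pre_fsum _ _) _.
  rewrite -!map_comp; exact: eR.
- rewrite map_cat; exact: eT (eSum IH1 IH2) (eS (fsum_cat _ _)).
- exact: eS (eA4 _).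
Qed.

Fixpoint words_ex k : seq (seq A) :=
  if k is k'.+1 then flatten [seq [seq a :: w | w <- words_ex k'] | a <- enum A]
  else [:: [::]].

Lemma mem_words_ex k w : (w \in words_ex k) = (size w == k).
Proof.
elim: k w => [|k IH] w; first by rewrite mem_seq1 size_eq0.
case: w => [|a w] /=.
  by apply/negbTE/flatten_mapP => -[b _ /mapP [w' _]].
- rewrite eqSS -IH; apply/flatten_mapP/idP.
    by case => b _ /mapP [w' Hw' [_ ->]].
  by move=> Hw; exists a; rewrite ?mem_enum //; apply/mapP; exists w.
Qed.

Lemma leafV_omega b : leaf (inl b) =E sumAct (leaf (inl b)).
Proof. case: b; [exact: d_ax (ax_Yomega A) | exact: d_ax (ax_Nomega A)]. Qed.

Lemma expand b k :
  leaf (inl b) =E fsum [seq wpre w (leaf (inl b)) | w <- words_ex k].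
Proof.
elim: k => [|k IH] /=; first exact: eS (eA4 _).
apply: eT (leafV_omega b) _.
apply: eT (bigsum_fsum _) _.
apply: eT (fsum_congr _ (fun a => ePre a IH)) _.
apply: eT (fsum_congr _ (fun a => Pre_fsum a _)) _.
rewrite map_flatten.
apply: eS; apply: eT (fsum_flatten _) _.
rewrite -!map_comp; apply: fsum_congr => a /=.
rewrite -!map_comp. exact: eR.
Qed.

Definition ex (D : nat) (e : ent) : seq ent :=
  let (u, l) := e in
  match l with
  | inl b => [seq (u ++ w, inl b) | w <- words_ex (D - size u)]
  | inr _ => [:: e]
  end.

Lemma ex_ok D e : mono e =E fsum (map mono (ex D e)).
Proof.
case: e => u [b|x] /=; last exact: eS (eA4 _).
rewrite /mono /=.
apply: eT (wpre_cong u (expand b (D - size u))) _.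
apply: eT (wpre_fsum _ _) _.
rewrite -!map_comp; apply: fsum_congr => w /=; rewrite wpre_cat; exact: eR.
Qed.

Lemma flatten_ok D L : fsum (map mono L) =E fsum (map mono (flatten (map (ex D) L))).
Proof.
elim: L => [|e L IH] /=; first exact: eR.
rewrite map_cat; apply: eT _ (eS (fsum_cat _ _)).
exact: eSum (ex_ok D e) IH.
Qed.


Definition covered (b : bool) (L : seq ent) (w : seq A) : bool :=
  has (fun e : ent => (e.2 == inl b) && prefix e.1 w) L.
Definition Both D L (u : seq A) : bool :=
  all (fun w => prefix u w ==> covered true L w && covered false L w) (words_ex D).
Definition isX (e : ent) : bool := if e.2 is inr _ then true else false.
Definition canonY D b L : seq ent := [seq (w, inl b) | w <- words_ex D & covered b L w].
Definition CC D L := canonY D true L ++ canonY D false L ++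
   [seq e <- L | isX e && ~~ Both D L e.1].
Definition XB D L := [seq e <- L | isX e && Both D L e.1].

Lemma mem_canonY D b L w l :
  ((w, l) \in canonY D b L) = [&& l == inl b, size w == D & covered b L w].
Proof.
apply/mapP/idP.
  case => w'; rewrite mem_filter mem_words_ex => /andP [Hc Hs] [-> ->].
  by rewrite eqxx Hs Hc.
case/and3P => /eqP -> Hs Hc; exists w => //.
by rewrite mem_filter mem_words_ex Hs Hc.
Qed.

Lemma flatten_ex_mem D L : (forall e, e \in L -> size e.1 <= D) ->
  flatten (map (ex D) L) =i CC D L ++ XB D L.
Proof.
move=> HD [w [b|x]].
- rewrite /CC !mem_cat !mem_canonY !mem_filter /= !orbF.
  apply/flatten_mapP/idP.
  + case => -[u [b'|y]] HuL /=; last by rewrite mem_seq1 => /eqP [].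
    case/mapP => w' Hw' [-> ->]; rewrite mem_words_ex in Hw'.
    have Hcov : covered b' L (u ++ w').
      by apply/hasP; exists (u, inl b') => //=; rewrite eqxx prefix_prefix.
    have Hsz : size (u ++ w') == D.
      by rewrite size_cat (eqP Hw') subnKC //; exact: (HD _ HuL).
    by move: Hcov; case: b' HuL => _ Hcov; rewrite eqxx Hsz Hcov ?orbT.
  + have H : forall b', [&& (inl b : bool + nat) == inl b', size w == D & covered b' L w] ->
       exists2 x, x \in L & (w, inl b) \in ex D x.
      move=> b' /and3P [Hb /eqP Hs /hasP [[u l] HuL /= /andP [/eqP Hl Hp]]].
      move: Hb => /eqP [Hb]; subst.
      exists (u, inl b') => //=; apply/mapP; exists (drop (size u) w).
        by rewrite mem_words_ex size_drop.
      by case/prefixP: Hp => w' ->; rewrite drop_size_cat.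
    by case/orP; apply: H.
- rewrite /CC !mem_cat !mem_canonY !mem_filter /=.
  apply/flatten_mapP/idP.
  + case => -[u [b'|y]] HuL /=.
      by case/mapP.
    rewrite mem_seq1 => /eqP [-> ->]; rewrite HuL; by case: (Both D L u).
  + move=> H; exists (w, inr x); last by rewrite /= mem_seq1.
    by case/orP: H => /andP [].
Qed.

Lemma absorb_all (F : mon) (X : seq ent) :
  (forall e, e \in X -> F =E Sum (mono e) F) ->
  Sum F (fsum (map mono X)) =E F.
Proof.
elim: X => [|e X IH] H /=; first exact: eA4.
apply: eT (eA2 _ _ _) _.
apply: eT (eSum (eA1 _ _) (eR _)) _.
apply: eT (eSum (eS (H e (mem_head _ _))) (eR _)) _.
apply: IH => e' He'; apply: H; by rewrite in_cons He' orbT.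
Qed.

Lemma canon_ok D L : (forall e, e \in L -> size e.1 <= D) ->
  fsum (map mono L) =E fsum (map mono (CC D L)).
Proof.
move=> HD.
apply: eT (flatten_ok D L) _.
apply: eT (fsum_eqset mono (flatten_ex_mem HD)) _.
rewrite map_cat; apply: eT (fsum_cat _ _) _.
apply: absorb_all => -[u [b|x]]; rewrite mem_filter //= => /andP [HB HuL].
set FC := fsum _.
have Hsub : {subset ex D (u, inl true) ++ ex D (u, inl false) <= CC D L}.
  move=> [w l]; rewrite mem_cat /CC !mem_cat !mem_canonY /=.
  have Hs : size u <= D := HD _ HuL.
  have G : forall b, (w, l) \in [seq (u ++ w0, inl b) | w0 <- words_ex (D - size u)] ->
     [&& l == inl b, size w == D & covered b L w].
    move=> b /mapP [w' Hw' [-> ->]]; rewrite eqxx size_cat.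
    rewrite mem_words_ex in Hw'; rewrite (eqP Hw') subnKC //=.
    have Hw : u ++ w' \in words_ex D.
      by rewrite mem_words_ex size_cat (eqP Hw') subnKC.
    rewrite eqxx /=; move: (allP HB _ Hw); rewrite prefix_prefix /= => /andP [] ? ?; by case: b.
  by case/orP => /G ->; rewrite ?orbT.
apply: eS.
apply: eT (eSum (eR _) (fsum_sub mono Hsub)) _.
rewrite map_cat.
apply: eT (eSum (eR _) (eSum (fsum_cat _ _) (eR _))) _.
apply: eT (eSum (eR _) (eSum (eSum (eS (ex_ok D _)) (eS (ex_ok D _))) (eR _))) _.
rewrite /mono /=.
apply: eT (eSum (eR _) (eSum (eS (wpre_sum _ _ _)) (eR _))) _.
apply: eT (eA2 _ _ _) _.
apply: eT (eSum (eS (wpre_sum _ _ _)) (eR _)) _.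
apply: eT (eSum (wpre_cong u (eT (eA1 _ _) (eS (eO1 _)))) (eR _)) _.
apply: eS.
apply: eT (fsum_sub mono Hsub) _.
rewrite map_cat.
apply: eT (eSum (fsum_cat _ _) (eR _)) _.
apply: eT (eSum (eSum (eS (ex_ok D _)) (eS (ex_ok D _))) (eR _)) _.
rewrite /mono /=.
exact: eSum (eS (wpre_sum _ _ _)) (eR _).
Qed.


Fixpoint topv (m : mon) (v : verdict) : Prop :=
  match m with
  | Verd v' => v' = v
  | Sum m1 m2 => topv m1 v \/ topv m2 v
  | _ => False
  end.

Fixpoint child (m : mon) (a : A) (k : mon) : Prop :=
  match m with
  | Pre a' k' => a' = a /\ k' = k
  | Sum m1 m2 => child m1 a k \/ child m2 a k
  | _ => False
  end.

Lemma step_inv m al k : step m al k ->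
  (exists v, topv m v /\ k = Verd A v) \/ (exists a, al = Some a /\ child m a k).
Proof.
elim => {m al k}.
- by move=> a m; right; exists a.
- move=> m n al m' _ [[v [Hv ->]]|[a [-> Hc]]]; [left; exists v | right; exists a]; by split => //; left.
- move=> m n al m' _ [[v [Hv ->]]|[a [-> Hc]]]; [left; exists v | right; exists a]; by split => //; right.
- by move=> v al; left; exists v.
Qed.

Lemma taus_inv m k : taus m k -> k = m \/ exists v, topv m v /\ k = Verd A v.
Proof.
elim => {m k} [m|m m1 m' Hs _ IH]; first by left.
right; case: (step_inv Hs) => [[v [Hv E]]|[a [E _]]] //; subst m1.
exists v; split => //; case: IH => [->|[v' [Hv' ->]]] //=; by rewrite Hv'.
Qed.

Lemma topv_step m v al : topv m v -> step m al (Verd A v).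
Proof.
elim: m => [v'|a m _|m1 IH1 m2 IH2|x] //=.
- move=> ->; exact: st_verd.
- by case=> H; [apply: st_sumL; apply: IH1 | apply: st_sumR; apply: IH2].
Qed.

Lemma child_step m a k : child m a k -> step m (Some a) k.
Proof.
elim: m => [v'|a' m _|m1 IH1 m2 IH2|x] //=.
- by case=> -> ->; exact: st_pre.
- by case=> H; [apply: st_sumL; apply: IH1 | apply: st_sumR; apply: IH2].
Qed.

Lemma topv_flat m b : topv m (vb b) -> ([::], inl b) \in flat m.
Proof.
elim: m => [v'|a m _|m1 IH1 m2 IH2|x] //=.
- by move=> ->; case: b.
- by rewrite mem_cat; case=> H; [rewrite IH1 | rewrite IH2 ?orbT].
Qed.

Lemma flat_topv m b : ([::], inl b) \in flat m -> topv m (vb b).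
Proof.
elim: m => [v'|a m _|m1 IH1 m2 IH2|x] //=.
all: try by case: v' => //; rewrite mem_seq1 => /eqP [->].
all: try by rewrite mem_cat => /orP [/IH1|/IH2]; auto.
all: try by case/mapP.
all: by rewrite mem_seq1.
Qed.

Lemma child_flat m a k e : child m a k -> e \in flat k -> (a :: e.1, e.2) \in flat m.
Proof.
elim: m => [v'|a' m _|m1 IH1 m2 IH2|x] //=.
- by case=> -> -> He; apply/mapP; exists e.
- by rewrite mem_cat; case=> H He; [rewrite IH1 | rewrite IH2 ?orbT].
Qed.

Lemma flat_child m a q l : (a :: q, l) \in flat m ->
  exists k, child m a k /\ (q, l) \in flat k.
Proof.
elim: m => [v'|a' m _|m1 IH1 m2 IH2|x] //=.
all: try by case: v'.
all: try by case/mapP => e He [-> -> ->]; exists m; rewrite -surjective_pairing.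
all: try by rewrite mem_cat => /orP [/IH1|/IH2] [k [Hc Hk]]; exists k; tauto.
all: by rewrite mem_seq1.
Qed.

Lemma cov_verd b v s : covered b (flat (Verd A v)) s -> v = vb b.
Proof. by case: v; case: b. Qed.

Lemma cov_top m b s : topv m (vb b) -> covered b (flat m) s.
Proof. move/topv_flat => H; apply/hasP; exists ([::], inl b) => //=; by rewrite eqxx prefix0s. Qed.

Lemma L1 j k b s : taus j k -> covered b (flat k) s -> covered b (flat j) s.
Proof.
case/taus_inv => [->|[v [Hv ->]]] // /cov_verd E; subst v; exact: cov_top.
Qed.

Lemma L2 j a k b s : step j (Some a) k -> covered b (flat k) s -> covered b (flat j) (a :: s).
Proof.
case/step_inv => [[v [Hv ->]] /cov_verd E|[a' [[<-] Hc]]]; first by subst v; exact: cov_top.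
case/hasP => e He /andP [Hb Hp]; apply/hasP; exists (a :: e.1, e.2); first exact: child_flat Hc He.
by rewrite /= Hb /= eqxx Hp.
Qed.

Lemma taus_trans (m k p : mon) : taus m k -> taus k p -> taus m p.
Proof. elim => // m0 m1 m' Hs _ IH H; exact: taus_step Hs (IH H). Qed.

Lemma wtrace_cons (m : mon) a s k :
  wtrace m (a :: s) k <-> exists k1, weak_act m a k1 /\ wtrace k1 s k.
Proof.
case: s => [|b s] //=; split.
- by move=> H; exists k; split => //; exact: taus_refl.
- case=> k1 [[j1 [j2 [H1 [H2 H3]]]] H4]; exists j1, j2; split => //; split => //.
  exact: taus_trans H3 H4.
Qed.

Lemma wtrace_verd v s : wtrace (Verd A v) s (Verd A v).
Proof.
elim: s => [|a s IH]; first exact: taus_refl.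
apply/wtrace_cons; exists (Verd A v); split => //.
by exists (Verd A v), (Verd A v); split; [exact: taus_refl|split; [exact: st_verd|exact: taus_refl]].
Qed.

Lemma sem m s b : wtrace m s (Verd A (vb b)) <-> covered b (flat m) s.
Proof.
elim: s m => [|a s IH] m; split.
- move=> H; apply: L1 H _; by case: b.
- case/hasP => -[[|c q] l] He /andP [/eqP /= El Hp] //; subst l.
  move/flat_topv: He => Ht; apply: taus_step (topv_step None Ht) _; exact: taus_refl.
- case/wtrace_cons => k1 [[j1 [j2 [H1 [H2 H3]]]] H4].
  apply: L1 H1 _; apply: L2 H2 _; apply: L1 H3 _; exact/IH.
- case/hasP => -[[|c q] l] He /andP [/eqP /= El Hp]; subst l.
  + move/flat_topv: He => Ht; apply/wtrace_cons; exists (Verd A (vb b)); split; last exact: wtrace_verd.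
    exists m, (Verd A (vb b)); split; [exact: taus_refl|split; [exact: topv_step|exact: taus_refl]].
  + move: Hp => /andP [/eqP E Hp]; subst c.
    case: (flat_child He) => k [Hc Hk].
    apply/wtrace_cons; exists k; split.
      exists m, k; split; [exact: taus_refl|split; [exact: child_step|exact: taus_refl]].
    apply/IH; apply/hasP; exists (q, inl b) => //=; by rewrite eqxx Hp.
Qed.


Lemma flat_subst_in sg m e : e \in flat m -> ~~ isX e -> e \in flat (subst sg m).
Proof.
elim: m e => [v|a m IH|m1 IH1 m2 IH2|x] e //=.
- case/mapP => e' He' -> HX; apply/mapP; exists e' => //; exact: IH.
- by rewrite !mem_cat => /orP [H|H] HX; [rewrite IH1 | rewrite IH2 ?orbT].
- by rewrite mem_seq1 => /eqP ->.
Qed.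

Lemma flat_subst_var sg m u x f : (u, inr x) \in flat m -> f \in flat (sg x) ->
  (u ++ f.1, f.2) \in flat (subst sg m).
Proof.
elim: m u => [v|a m IH|m1 IH1 m2 IH2|y] u //=.
  by case: v => //; rewrite mem_seq1 => /eqP [].
- case/mapP => e' He' [-> E] Hf; apply/mapP; exists (e'.1 ++ f.1, f.2) => //.
  by apply: IH => //; rewrite E -surjective_pairing.
- by rewrite !mem_cat => /orP [H|H] Hf; [rewrite IH1 | rewrite IH2 ?orbT].
- by rewrite mem_seq1 => /eqP [-> ->] Hf; rewrite -surjective_pairing.
Qed.

Lemma flat_subst_out sg m e : e \in flat (subst sg m) ->
  e \in flat m \/ exists u x f, [/\ (u, inr x) \in flat m, f \in flat (sg x) & e = (u ++ f.1, f.2)].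
Proof.
elim: m e => [v|a m IH|m1 IH1 m2 IH2|x] e //=.
- by left.
- case/mapP => e' He' ->; case: (IH _ He') => [H|[u [x [f [Hu Hf E]]]]].
    by left; apply/mapP; exists e'.
  right; exists (a :: u), x, f; split => //; first by apply/mapP; exists (u, inr x).
  by rewrite E.
- rewrite !mem_cat => /orP [/IH1|/IH2] [H|[u [x [f [Hu Hf E]]]]].
  + by left; rewrite H.
  + by right; exists u, x, f; rewrite mem_cat Hu.
  + by left; rewrite H orbT.
  + by right; exists u, x, f; rewrite mem_cat Hu orbT.
- move=> He; right; exists [::], x, e; split => //; first exact: mem_head.
  by rewrite -surjective_pairing.
Qed.

Lemma closed_wpre v (t : mon) : Defs.closed (wpre v t) = Defs.closed t.
Proof. by elim: v => //= a v ->. Qed.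

Lemma flat_wpre v (t : mon) : flat (wpre v t) = [seq (v ++ e.1, e.2) | e <- flat t].
Proof.
elim: v => [|a v IH] /=.
  by rewrite -[LHS]map_id; apply: eq_map => -[].
by rewrite IH -map_comp.
Qed.

Lemma pre_mk (s : seq A) w k d : prefix s (mkseq w k) -> forall i, i < size s -> nth d s i = w i.
Proof.
case/prefixP => t E i Hi.
have Hk : i < k by rewrite -(size_mkseq w k) E size_cat; apply: leq_trans Hi (leq_addr _ _).
by rewrite -(nth_mkseq d w Hk) E nth_cat Hi.
Qed.

Lemma prefix_nth (s w : seq A) d : size s <= size w ->
  (forall i, i < size s -> nth d s i = nth d w i) -> prefix s w.
Proof.
move=> Hs H; rewrite prefixE; apply/eqP; apply: (@eq_from_nth _ d); first by rewrite size_takel.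
by move=> i; rewrite size_takel // => Hi; rewrite nth_take // H.
Qed.

Lemma oeq_cov (m n : mon) sg b w : omega_eq m n -> (forall x, Defs.closed (sg x)) ->
  (exists k, covered b (flat (subst sg m)) (mkseq w k)) ->
  (exists k, covered b (flat (subst sg n)) (mkseq w k)).
Proof.
move=> H Hc [k Hk]; have [H1 H2] := H sg Hc.
case: b Hk => Hk.
- have : omega_ext (La (subst sg n)) w by apply/H1; exists k; exact/(sem _ _ true).
  by case=> k' Hk'; exists k'; exact/(sem _ _ true).
- have : omega_ext (Lr (subst sg n)) w by apply/H2; exists k; exact/(sem _ _ false).
  by case=> k' Hk'; exists k'; exact/(sem _ _ false).
Qed.

Lemma oeq_sym (m n : mon) : omega_eq m n -> omega_eq n m.
Proof. move=> H sg Hc; case: (H sg Hc) => H1 H2; split => w; by [rewrite H1 | rewrite H2]. Qed.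

Definition sg0 : nat -> mon := fun _ => mend A.

Lemma cov_eq (a0 : A) (m n : mon) D b w : omega_eq m n -> (forall e, e \in flat n -> size e.1 <= D) ->
  size w = D -> covered b (flat m) w -> covered b (flat n) w.
Proof.
move=> H HD Hw Hc.
have [k Hk] : exists k, covered b (flat (subst sg0 n)) (mkseq (nth a0 w) k).
  apply: (oeq_cov (m := m)) => //; exists (size w); rewrite mkseq_nth.
  case/hasP: Hc => e He /andP [Hb Hp]; apply/hasP; exists e; last by rewrite Hb.
  apply: flat_subst_in => //; by rewrite /isX (eqP Hb).
case/hasP: Hk => e He /andP [Hb Hp].
have Hen : e \in flat n.
  by case: (flat_subst_out He) => [//|[u [x [f [_ Hf _]]]]]; rewrite in_nil in Hf.
apply/hasP; exists e => //; rewrite Hb /=; apply: (prefix_nth (d := a0)).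
  by rewrite Hw HD.
by move=> i Hi; rewrite (pre_mk a0 Hp).
Qed.

Lemma nth_catr (d : A) s t j : nth d (s ++ t) (size s + j) = nth d t j.
Proof. by elim: s. Qed.

Lemma nth_tail (a0 a1 : A) D j : nth a0 (nseq D a0 ++ [:: a1]) j = if j == D then a1 else a0.
Proof.
elim: D j => [|D IH] [|j] //=; try by rewrite nth_nil.
Qed.

Lemma nth_v (a0 a1 : A) D (z p : seq A) i : size z + size p <= i ->
  nth a0 (z ++ p ++ nseq D a0 ++ [:: a1]) i = if i == size z + size p + D then a1 else a0.
Proof.
move=> Hi; rewrite -(subnKC Hi) catA -(size_cat z p) nth_catr nth_tail.
by rewrite size_cat eqn_add2l.
Qed.

Lemma aper (a0 a1 : A) D (u u' p : seq A) : a0 != a1 -> size u <= D -> size u' <= D ->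
  (forall i, i < size (u' ++ p ++ nseq D a0 ++ [:: a1]) ->
     nth a0 (u' ++ p ++ nseq D a0 ++ [:: a1]) i = nth a0 (u ++ p ++ nseq D a0 ++ [:: a1]) i) ->
  u' = u.
Proof.
move=> Hne Hu Hu' H.
have Hsz : forall z, size (z ++ p ++ nseq D a0 ++ [:: a1]) = size z + size p + D + 1.
  by move=> z; rewrite !size_cat size_nseq /=; lia.
have Nv : forall z i, size z + size p <= i ->
    nth a0 (z ++ p ++ nseq D a0 ++ [:: a1]) i = if i == size z + size p + D then a1 else a0.
  by move=> z i Hi; exact: nth_v.
case: (ltngtP (size u') (size u)) => Hc.
- have E1 := Nv u' (size u' + size p + D) (leq_addr _ _).
  have E2 := Nv u (size u' + size p + D) ltac:(lia).
  have := H (size u' + size p + D) ltac:(rewrite Hsz; lia).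
  rewrite E1 E2 eqxx ifN_eq; last by apply/negP => /eqP; lia.
  by move/eqP; rewrite eq_sym (negbTE Hne).
- have E1 := Nv u (size u + size p + D) (leq_addr _ _).
  have E2 := Nv u' (size u + size p + D) ltac:(lia).
  have := H (size u + size p + D) ltac:(rewrite Hsz; lia).
  rewrite E1 E2 eqxx ifN_eq; last by apply/negP => /eqP; lia.
  by move/eqP; rewrite (negbTE Hne).
- apply: (@eq_from_nth _ a0) => // i Hi.
  have := H i; rewrite size_cat nth_cat Hi nth_cat -Hc Hi; apply; lia.
Qed.

Lemma var_eq (a0 a1 : A) (m n : mon) D u x : a0 != a1 -> omega_eq m n ->
  (forall e, e \in flat n -> size e.1 <= D) -> size u <= D ->
  (u, inr x) \in flat m -> ~~ Both D (flat n) u -> (u, inr x) \in flat n.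
Proof.
move=> Hne H HD Hu Hm /allPn [w Hw]; rewrite negb_imply => /andP [Hpw Hncov].
rewrite mem_words_ex in Hw.
case/prefixP: Hpw => p Ew.
have [b Hnc] : exists b, ~~ covered b (flat n) w.
  by move: Hncov; rewrite negb_and => /orP [H1|H1]; [exists true | exists false].
set v := p ++ nseq D a0 ++ [:: a1].
set c := wpre v (Verd A (vb b)).
set sg := fun y => if y == x then c else mend A.
have Hcl : forall y, Defs.closed (sg y).
  by move=> y; rewrite /sg; case: (y == x) => //; rewrite /c closed_wpre.
have Hfc : flat c = [:: (v, inl b)].
  by rewrite /c flat_wpre; case: (b) => /=; rewrite cats0.
have [k Hk] : exists k, covered b (flat (subst sg n)) (mkseq (nth a0 (u ++ v)) k).
  apply: (oeq_cov (m := m)) => //; exists (size (u ++ v)); rewrite mkseq_nth.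
  apply/hasP; exists (u ++ v, inl b); last by rewrite /= eqxx prefix_refl.
  have := flat_subst_var (sg := sg) (f := (v, inl b)) Hm; apply.
  by rewrite /sg eqxx Hfc mem_head.
case/hasP: Hk => e He /andP [Hb Hp].
case: (flat_subst_out He) => [H1|[u' [y [f [Hu' Hf E]]]]].
- exfalso; move/negP: Hnc; apply; apply/hasP; exists e => //; rewrite Hb /=.
  apply: (prefix_nth (d := a0)); first by rewrite (eqP Hw); apply: HD.
  move=> i Hi; rewrite (pre_mk a0 Hp) // Ew /v catA nth_cat.
  have -> // : i < size (u ++ p).
  by apply: leq_trans Hi _; rewrite -Ew (eqP Hw) HD.
- move: Hf; rewrite /sg; case: (y =P x) => [Ey|_]; last by rewrite in_nil.
  subst y; rewrite Hfc mem_seq1 => /eqP Ef; subst f e.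
  suff Eu : u' = u by rewrite -Eu.
  apply: (aper (p := p) Hne Hu (HD _ Hu')) => i Hi.
  by rewrite (pre_mk a0 Hp).
Qed.

Lemma maxD (L : seq ent) e : e \in L -> size e.1 <= foldr maxn 0 [seq size e.1 | e <- L].
Proof.
elim: L => [|e' L IH] //=; rewrite in_cons => /orP [/eqP ->|H]; first exact: leq_maxl.
exact: leq_trans (IH H) (leq_maxr _ _).
Qed.

End Proof.

Theorem mainTheorem19 (A : finType) : 1 < #|A| ->
  forall m n : mon A, omega_eq m n -> derivable (@E_omega_f A) m n.
Proof.
move=> HA m n H.
case/card_gt1P: HA => a0 [a1 [_ _ Hne]].
set D := foldr maxn 0 [seq size e.1 | e <- flat m ++ flat n].
have HDm : forall e, e \in flat m -> size e.1 <= D.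
  by move=> e He; apply: maxD; rewrite mem_cat He.
have HDn : forall e, e \in flat n -> size e.1 <= D.
  by move=> e He; apply: maxD; rewrite mem_cat He orbT.
have H' := oeq_sym H.
have Hcov : forall b w, size w = D -> covered b (flat m) w = covered b (flat n) w.
  move=> b w Hw; apply/idP/idP => Hc; [exact: (cov_eq a0 H HDn Hw Hc) | exact: (cov_eq a0 H' HDm Hw Hc)].
have HB : forall u, Both D (flat m) u = Both D (flat n) u.
  move=> u; apply: eq_in_all => w; rewrite mem_words_ex => /eqP Hw; by rewrite !Hcov.
have HC : CC D (flat m) =i CC D (flat n).
  move=> [w l]; rewrite /CC !mem_cat !mem_canonY !mem_filter HB.
  have Hc : forall b, [&& l == inl b, size w == D & covered b (flat m) w] =
                     [&& l == inl b, size w == D & covered b (flat n) w].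
    by move=> b; case: (size w =P D) => Hw; rewrite ?andbF //= Hcov.
  rewrite !Hc {Hc}; congr (_ || (_ || _)).
  case: l => [b|x] //=; case EB: (Both D (flat n) w) => //=.
  apply/idP/idP => Hx.
  - exact: var_eq Hne H HDn (HDm _ Hx) Hx (negbT EB).
  - by apply: (var_eq Hne H' HDm (HDn _ Hx) Hx); rewrite HB EB.
apply: eT (flat_ok m) _.
apply: eT (canon_ok HDm) _.
apply: eT (fsum_eqset (@mono A) HC) _.
apply: eS; apply: eT (flat_ok n) _; exact: canon_ok HDn.
Qed.
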